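(* Let $K$ be a field of characteristic $0$ with henselian valuation ring $A$, maximal ideal $\mathfrak{m}_A$, valuation $v$ and residue field of characteristic $p>0$, containing a primitive $p$-th root of unity $\zeta$; put $\mathfrak{z}=\zeta-1$. Let $L|K$ be a Kummer extension of degree $p$ with defect $p$, $B$ the integral closure of $A$ in $L$, and let $\mathscr{S}=\{\alpha\in L: \alpha^p=h\in A^\times,\ h-1\in\mathfrak{m}_A,\ K(\alpha)=L\}$. For $\alpha\in\mathscr{S}$ let $\alpha'=\gamma_\alpha(\alpha-1)/\mathfrak{z}$ with $\gamma_\alpha\in A$ chosen so that $\alpha'\in B^\times$. If $\alpha_1,\alpha_2\in\mathscr{S}$ satisfy $v(\alpha_1-1)\le v(\alpha_2-1)$, then $A[\alpha_1']\subset A[\alpha_2']$.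
   Context: $v$ also denotes its unique extension to $L$. Defect $p$ means $(v(L^\times):v(K^\times))=1$ and the residue extension is trivial, although $[L:K]=p$. *)

(* Defs.v *)
From HB Require Import structures.
From mathcomp Require Import all_boot all_order all_algebra all_field.
Set Implicit Arguments. Unset Strict Implicit. Unset Printing Implicit Defensive.
Import Order.TTheory GRing.Theory Num.Theory.
Local Open Scope ring_scope.

(* Valuation theory via valuation rings.  A valuation v on a field F is
   represented (up to equivalence) by its valuation ring O = {x | v x >= 0}. *)

Section ValRing.
Variable F : fieldType.
Implicit Types (O : {pred F}) (x y : F).

Definition is_subring O : Prop :=
  [/\ 0 \in O, 1 \in O,
      (forall x y, x \in O -> y \in O -> x - y \in O) &
      (forall x y, x \in O -> y \in O -> x * y \in O)].

Definition is_valuation_ring O : Prop :=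
  is_subring O /\ (forall x, x != 0 -> x \in O \/ x^-1 \in O).

Definition vunit O x : Prop := [/\ x \in O, x != 0 & x^-1 \in O].

Definition vmax O x : Prop := x \in O /\ ~ vunit O x.

(* v x <= v y  for the valuation v with valuation ring O *)
Definition vle O x y : Prop := y = 0 \/ (x != 0 /\ y / x \in O).

Definition polyIn O (q : {poly F}) : Prop := forall i, q`_i \in O.

(* henselian valuation ring (Hensel's lemma for simple residual roots) *)
Definition henselian O : Prop :=
  forall (f : {poly F}) (a : F), f \is monic -> polyIn O f -> a \in O ->
    vmax O f.[a] -> vunit O (f^`()).[a] ->
    exists2 b, b \in O & f.[b] = 0 /\ vmax O (b - a).
End ValRing.

Section Ext.
Variables (K : fieldType) (L : fieldExtType K).

Definition int_closure (A : {pred K}) (x : L) : Prop :=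
  exists2 q : {poly K}, q \is monic /\ polyIn A q & (map_poly (in_alg L) q).[x] = 0.

Definition int_closure_unit (A : {pred K}) (x : L) : Prop :=
  [/\ int_closure A x, x != 0 & int_closure A x^-1].

Definition adjoin_ring (A : {pred K}) (b : L) (x : L) : Prop :=
  exists2 q : {poly K}, polyIn A q & x = (map_poly (in_alg L) q).[b].

Definition extends_valring (A : {pred K}) (O : {pred L}) : Prop :=
  is_valuation_ring O /\ (forall c : K, (c%:A \in O) <-> (c \in A)).

Definition generates (a : L) : Prop := <<1%VS; a>>%VS = fullv.

Definition kummer_deg (p : nat) : Prop :=
  \dim {:L} = p /\ exists a : L, exists c : K, a ^+ p = c%:A /\ generates a.

(* defect p (given [L:K] = p): value group index 1 and trivial residue
   extension, for the extension O of the valuation ring A to L. *)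
Definition immediate (A : {pred K}) (O : {pred L}) : Prop :=
  (forall y : L, y != 0 -> exists c : K, c != 0 /\ vunit O (y / c%:A)) /\
  (forall b : L, b \in O -> exists2 a : K, a \in A & vmax O (b - a%:A)).

Definition kummer_gen (A : {pred K}) (p : nat) (a : L) : Prop :=
  exists h : K, [/\ a ^+ p = h%:A, vunit A h, vmax A (h - 1) & generates a].
End Ext.

(* Main.v *)
Set Warnings "-all".
Require Import Defs.
From HB Require Import structures.
From mathcomp Require Import all_boot all_order all_algebra all_field.
From mathcomp Require Import ring zify.
Import Order.TTheory GRing.Theory Num.Theory.
Set Implicit Arguments. Unset Strict Implicit.
Local Open Scope ring_scope.

Section Sub.
Variables (F : fieldType) (S : {pred F}) (hS : is_subring S).
Lemma sub0 : 0 \in S. Proof. by case: hS. Qed.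
Lemma sub1 : 1 \in S. Proof. by case: hS. Qed.
Lemma subB x y : x \in S -> y \in S -> x - y \in S. Proof. by case: hS => _ _ h _; apply: h. Qed.
Lemma subM x y : x \in S -> y \in S -> x * y \in S. Proof. by case: hS => _ _ _ h; apply: h. Qed.
Lemma subN x : x \in S -> - x \in S.
Proof. by move=> hx; rewrite -sub0r; apply: subB => //; exact: sub0. Qed.
Lemma subD x y : x \in S -> y \in S -> x + y \in S.
Proof. by move=> hx hy; rewrite -[y]opprK; apply: subB => //; exact: subN. Qed.
Lemma subX x n : x \in S -> x ^+ n \in S.
Proof. by move=> hx; elim: n => [|n IH]; rewrite ?expr0 ?sub1 // exprS subM. Qed.
Lemma subn n : n%:R \in S.
Proof. by elim: n => [|n IH]; rewrite ?sub0 // -addn1 natrD subD ?sub1. Qed.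
Lemma subsum (I : Type) (r : seq I) (P : pred I) (G : I -> F) :
  (forall i, P i -> G i \in S) -> \sum_(i <- r | P i) G i \in S.
Proof. by move=> h; apply: (big_ind (fun x => x \in S)) => //; [exact: sub0 | exact: subD]. Qed.
End Sub.

Section Adj.
Variables (K : fieldType) (L : fieldExtType K) (A : {pred K}) (hA : is_subring A).

Lemma polyInD q1 q2 : polyIn A q1 -> polyIn A q2 -> polyIn A (q1 + q2).
Proof. by move=> h1 h2 i; rewrite coefD subD. Qed.
Lemma polyInM q1 q2 : polyIn A q1 -> polyIn A q2 -> polyIn A (q1 * q2).
Proof. by move=> h1 h2 i; rewrite coefM subsum // => k _; rewrite subM. Qed.
Lemma polyInC c : c \in A -> polyIn A c%:P.
Proof. by move=> h i; rewrite coefC; case: eqP => _ //; exact: sub0. Qed.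
Lemma polyInX : polyIn A 'X.
Proof. by move=> i; rewrite coefX; case: eqP => _; [exact: sub1 | exact: sub0]. Qed.

Variable b : L.
Lemma adjD x y : adjoin_ring A b x -> adjoin_ring A b y -> adjoin_ring A b (x + y).
Proof.
by move=> [q1 h1 ->] [q2 h2 ->]; exists (q1 + q2); [exact: polyInD | by rewrite rmorphD hornerD].
Qed.
Lemma adjM x y : adjoin_ring A b x -> adjoin_ring A b y -> adjoin_ring A b (x * y).
Proof.
by move=> [q1 h1 ->] [q2 h2 ->]; exists (q1 * q2); [exact: polyInM | by rewrite rmorphM hornerM].
Qed.
Lemma adjC c : c \in A -> adjoin_ring A b c%:A.
Proof. by move=> h; exists c%:P; [exact: polyInC | by rewrite map_polyC hornerC]. Qed.
Lemma adjb : adjoin_ring A b b.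
Proof. by exists 'X; [exact: polyInX | by rewrite map_polyX hornerX]. Qed.
Lemma adjX x n : adjoin_ring A b x -> adjoin_ring A b (x ^+ n).
Proof.
move=> h; elim: n => [|n IH]; first last.
  by rewrite exprS; apply: adjM.
by rewrite expr0 -[1]scale1r; apply: adjC; exact: sub1.
Qed.
Lemma adjsum (I : Type) (r : seq I) (P : pred I) (G : I -> L) :
  (forall i, P i -> adjoin_ring A b (G i)) -> adjoin_ring A b (\sum_(i <- r | P i) G i).
Proof.
move=> h; apply: (big_ind (adjoin_ring A b)) => //; last exact: adjD.
by rewrite -(scale0r 1); apply: adjC; exact: sub0.
Qed.
Lemma adjpoly Q y : polyIn A Q -> adjoin_ring A b y ->
  adjoin_ring A b ((map_poly (in_alg L) Q).[y]).
Proof.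
move=> hQ hy; rewrite horner_coef; apply: adjsum => i _.
by rewrite coef_map; apply: adjM; [apply: adjC | apply: adjX].
Qed.
End Adj.
Section Val.
Variables (K : fieldType) (L : fieldExtType K) (A : {pred K}) (O : {pred L}).
Hypotheses (hA : is_valuation_ring A) (hO : is_valuation_ring O)
  (ext : forall c : K, (c%:A \in O) <-> (c \in A)).

Let hOs : is_subring O := hO.1.
Let sB := subB hOs.
Let sM := subM hOs.

Lemma OsubB x y : x \in O -> y \in O -> x - y \in O. Proof. exact: (subB hOs). Qed.

Lemma int_in_O x : int_closure A x -> x \in O.
Proof.
move=> [q [mq qA] qx].
have [->|x0] := eqVneq x 0; first exact: (sub0 hOs).
case: (hO.2 x x0) => // yO.
set y := x^-1 in yO.
have xy : x * y = 1 by rewrite mulfV.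
have sz : size q = (size q).-1.+1 by rewrite prednK // lt0n size_poly_eq0 monic_neq0.
set n := (size q).-1 in sz.
have qn : q`_n = 1 by move/monicP: mq; rewrite /lead_coef sz.
have e : forall i : nat, (i < n)%N -> x ^+ i * y ^+ n = y ^+ (n.-1 - i) * y.
  move=> i hi; rewrite -exprSr.
  have -> : y ^+ n = y ^+ i * y ^+ (n.-1 - i).+1.
    by rewrite -exprD; congr (_ ^+ _); lia.
  by rewrite mulrA -exprMn xy expr1n mul1r.
set w := \sum_(i < n) (q`_i)%:A * y ^+ (n.-1 - i).
have wO : w \in O.
  apply: (subsum hOs) => i _; apply: sM; last exact: (subX hOs).
  by apply/ext; apply: qA.
have : 0 = y * w + 1.
  have := congr1 (fun t => t * y ^+ n) qx.
  rewrite mul0r horner_coef size_map_poly sz big_ord_recr /= mulrDl.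
  rewrite (_ : (map_poly (in_alg L) q)`_n = 1); last by rewrite coef_map qn /= scale1r.
  rewrite mul1r -exprMn xy expr1n mulr_suml => <-; congr (_ + _).
  rewrite /w mulr_sumr; apply: eq_bigr => i _.
  by rewrite coef_map -mulrA e // /= mulrCA mulrC -mulrA mulrCA.
move=> h; have -> : x = - w.
  have : x * (y * w + 1) = 0 by rewrite -h mulr0.
  by rewrite mulrDr mulr1 mulrA xy mul1r => /eqP; rewrite addrC addr_eq0 => /eqP.
by rewrite -sub0r; apply: sB => //; exact: (sub0 hOs).
Qed.

Lemma pow_in_O x p h : (0 < p)%N -> x ^+ p = h%:A -> vunit A h ->
  [/\ x \in O, x != 0 & x^-1 \in O].
Proof.
move=> p0 xp [hA' h0 hiA].
have hO' : h%:A \in O by apply/ext.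
have hiO : (h%:A)^-1 \in O.
  have <- : (h^-1)%:A = (h%:A)^-1 :> L by rewrite -!in_algE fmorphV.
  by apply/ext.
have x0 : x != 0.
  by apply: contra h0 => /eqP x0; move: xp; rewrite x0 expr0n gtn_eqF //= => /eqP; rewrite eq_sym scaler_eq0 oner_eq0 orbF.
have e1 : x = h%:A * (x^-1) ^+ p.-1.
  by rewrite -xp -{1}(prednK p0) exprS -mulrA exprVn mulfV ?mulr1 ?expf_neq0.
have xO : x \in O.
  case: (hO.2 x x0) => // xiO; rewrite e1; apply: sM => //; exact: (subX hOs).
split => //.
have -> : x^-1 = (h%:A)^-1 * x ^+ p.-1.
  by rewrite -xp -[in (x ^+ p)^-1](prednK p0) exprS invfM -mulrA mulVf ?mulr1 // expf_neq0.
by apply: sM => //; exact: (subX hOs).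
Qed.
End Val.

Section Kum.
Variables (F : fieldType) (L : fieldExtType F).

Lemma kummer_lemma p (zeta : F) (e a : L) (h1 h2 : F) :
  prime p -> p.-primitive_root zeta -> \dim {:L} = p -> generates e ->
  e ^+ p = h2%:A -> a ^+ p = h1%:A -> a != 0 ->
  exists c : F, exists j : nat, a = c%:A * e ^+ j.
Proof.
move=> pp pz dimL gen ep ap a0.
have p0 : (0 < p)%N := prime_gt0 pp.
have hgen : <<asval (1%AS : {subfield L}); e>>%VS = fullv by exact: gen.
have degp : adjoin_degree 1%AS e = p.
  rewrite adjoin_degreeE.
  by rewrite hgen dimL dimv1 divn1.
set z := in_alg L zeta.
have pz' : p.-primitive_root z by rewrite fmorph_primitive_root.
have z1 : z \in (1%AS : {subfield L}) by apply/vlineP; exists zeta.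
have conj : forall P, P \is a polyOver (1%AS : {subfield L}) -> root P e -> root P (z * e).
  move=> P PO Pe; have md := minPoly_dvdp PO Pe.
  have hO : h2%:A \in (1%AS : {subfield L}) by apply/vlineP; exists h2.
  have XO : ('X^p - (h2%:A)%:P) \is a polyOver (1%AS : {subfield L}).
    by rewrite polyOverXnsubC.
  have md2 := minPoly_dvdp XO (introT rootP _ : root _ e).
  have eqm : minPoly 1%AS e %= 'X^p - (h2%:A)%:P.
    rewrite -dvdp_size_eqp; last first.
      by apply: md2; rewrite !hornerE ep subrr.
    by rewrite size_minPoly size_XnsubC // degp.
  apply: root_dvdp md _; rewrite (eqp_root eqm).
  by rewrite rootE !hornerE exprMn (prim_expr_order pz') ep mul1r subrr.
set f := Fadjoin_poly 1%AS e a.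
have fe : f.[e] = a by apply: Fadjoin_poly_eq; rewrite hgen memvf.
have fO : f \is a polyOver (1%AS : {subfield L}) by exact: Fadjoin_polyOver.
have fsz : (size f <= p)%N by rewrite -degp size_Fadjoin_poly.
have h1O : h1%:A \in (1%AS : {subfield L}) by apply/vlineP; exists h1.
have fz : f.[z * e] ^+ p = h1%:A.
  have := conj (f ^+ p - (h1%:A)%:P).
  rewrite rpredB ?rpredX ?polyOverC // => /(_ isT).
  rewrite !rootE !hornerE fe ap subrr eqxx => /(_ isT) /eqP.
  by move/subr0_eq.
have ap0 : a ^+ p != 0 by rewrite expf_neq0.
have [k hk] : {k : 'I_p | f.[z * e] / a = z ^+ k}.
  apply: prim_rootP => //; rewrite expr_div_n fz -ap mulfV //.
have fzk : f.[z * e] = z ^+ k * a by rewrite -hk mulfVK.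
set g := \poly_(i < p) (f`_i * (z ^+ i - z ^+ k)).
have gO : g \is a polyOver (1%AS : {subfield L}).
  apply/polyOverP => i; rewrite coef_poly; case: ifP => _; last exact: rpred0.
  by rewrite rpredM ?rpredB ?rpredX ?(polyOverP fO).
have gsz : (size g <= adjoin_degree 1%AS e)%N by rewrite degp size_poly.
have g0 : g = 0.
  apply/eqP; rewrite -(root_small_adjoin_poly gO gsz) rootE.
  rewrite (horner_coef_wide _ (size_poly _ _)).
  have -> : \sum_(i < p) g`_i * e ^+ i = f.[z * e] - z ^+ k * f.[e].
    rewrite !(horner_coef_wide _ fsz) mulr_sumr -sumrB; apply: eq_bigr => i _.
    rewrite coef_poly ltn_ord exprMn; ring.
  by rewrite fe fzk subrr.
have fi0 : forall i : 'I_p, i != k -> f`_i = 0.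
  move=> i ik; have := congr1 (fun q : {poly L} => q`_i) g0.
  rewrite coef_poly ltn_ord coef0 => /eqP; rewrite mulf_eq0 subr_eq0.
  rewrite (eq_prim_root_expr pz') !modn_small // => /orP[/eqP //|].
  by move=> ik2; case/eqP: ik; apply: val_inj; apply/eqP.
have [c hc] : exists c, f`_k = c *: 1 by apply/vlineP; exact: (polyOverP fO k).
exists c, k; rewrite -fe (horner_coef_wide _ fsz) (bigD1 k) //= big1 ?addr0.
  by rewrite hc -in_algE.
by move=> i ik; rewrite fi0 ?mul0r.
Qed.
End Kum.

Unset Implicit Arguments.
Theorem lemma5p3 (K : fieldType) (L : fieldExtType K)
  (A : {pred K}) (O : {pred L}) (p : nat) (zeta : K)
  (a1 a2 : L) (g1 g2 : K) :
  [pchar K] =i pred0 ->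
  is_valuation_ring A -> henselian A ->
  prime p -> vmax A (p%:R) ->
  p.-primitive_root zeta ->
  kummer_deg L p ->
  extends_valring A O ->
  immediate A O ->
  kummer_gen A p a1 -> kummer_gen A p a2 ->
  g1 \in A -> g2 \in A ->
  int_closure_unit A (g1%:A * (a1 - 1) / (zeta - 1)%:A) ->
  int_closure_unit A (g2%:A * (a2 - 1) / (zeta - 1)%:A) ->
  vle O (a1 - 1) (a2 - 1) ->
  forall x : L,
    adjoin_ring A (g1%:A * (a1 - 1) / (zeta - 1)%:A) x ->
    adjoin_ring A (g2%:A * (a2 - 1) / (zeta - 1)%:A) x.
Proof.
move=> _ hA _ pp _ pz [dimL _] [hO ext] _ [h1 [a1p h1u _ gen1]] [h2 [a2p h2u _ gen2]].
move=> g1A g2A [u1i u1n0 _] [_ u2n0 u2ii] hle x hx.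
have hAs : is_subring A := hA.1.
have hOs : is_subring O := hO.1.
have p0 := prime_gt0 pp.
set z := zeta - 1 in u1i u1n0 u2n0 u2ii hx *.
have z0 : z != 0.
  rewrite subr_eq0; apply/negP => /eqP ez.
  have := eq_prim_root_expr pz 1 0; rewrite expr1 expr0 ez eqxx.
  by rewrite !modn_small ?prime_gt1.
have [a1O a10 a1iO] := pow_in_O hO ext p0 a1p h1u.
have [a2O a20 a2iO] := pow_in_O hO ext p0 a2p h2u.
have [c [j ha1]] := kummer_lemma pp pz dimL gen2 a2p a1p a10.
set u1 := g1%:A * (a1 - 1) / z%:A in u1i u1n0 hx *.
set u2 := g2%:A * (a2 - 1) / z%:A in u2n0 u2ii *.
have u1O : u1 \in O := int_in_O hO ext u1i.
have u2iO : u2^-1 \in O := int_in_O hO ext u2ii.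
have b1n0 : a1 - 1 != 0 by apply: contra u1n0 => /eqP e; rewrite /u1 e mulr0 mul0r.
have b2n0 : a2 - 1 != 0 by apply: contra u2n0 => /eqP e; rewrite /u2 e mulr0 mul0r.
have g2n0 : g2 != 0 by apply: contra u2n0 => /eqP e; rewrite /u2 e scale0r mul0r mul0r.
have rO : (a2 - 1) / (a1 - 1) \in O.
  by case: hle => [/eqP b0 | [_ h]] //; rewrite b0 in b2n0.
have b2O : a2 - 1 \in O by apply: (subB hOs) => //; exact: (sub1 hOs).
have cA : c \in A.
  apply/ext; have -> : c%:A = a1 * (a2^-1) ^+ j.
    by rewrite ha1 exprVn mulfK // expf_neq0.
  by apply: (subM hOs) => //; exact: (subX hOs).
set S := \sum_(i < j) a2 ^+ i.
have SO : S \in O by apply: (subsum hOs) => i _; exact: (subX hOs).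
have hS : a2 ^+ j = 1 + (a2 - 1) * S by rewrite -subrX1 addrC subrK.
set d0 := g1 * (c - 1) / z.
set d := fun i : nat => c * 'C(j, i.+1)%:R * g1 * z ^+ i / g2 ^+ i.+1.
have d0A : d0 \in A.
  apply/ext; have -> : d0%:A = u1 * (1 - c%:A * ((a2 - 1) / (a1 - 1)) * S).
    rewrite /u1 /d0; move: b1n0; rewrite ha1 hS -!in_algE => b1n0.
    field; rewrite ?fmorph_eq0 ?b1n0 //.
  apply: (subM hOs) => //; apply: (subB hOs); first exact: (sub1 hOs).
  by apply: (subM hOs) => //; apply: (subM hOs) => //; apply/ext.
have dA : forall i, d i \in A.
  move=> i; apply/ext.
  have -> : (d i)%:A = (c * 'C(j, i.+1)%:R)%:A *
      (u1 * (u2^-1) ^+ i.+1 * (a2 - 1) ^+ i * ((a2 - 1) / (a1 - 1))).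
    rewrite /u1 /u2 /d -!in_algE.
    rewrite !(rmorphM, fmorphV, rmorphXn) !exprS !exprVn !exprMn !exprVn.
    set Z := GRing.in_alg L z. set G2 := GRing.in_alg L g2.
    have Z0 : Z != 0 by rewrite fmorph_eq0.
    have G0 : G2 != 0 by rewrite fmorph_eq0.
    have Zi : Z ^+ i != 0 by rewrite expf_neq0.
    have Gi : G2 ^+ i != 0 by rewrite expf_neq0.
    have Bi : (a2 - 1) ^+ i != 0 by rewrite expf_neq0.
    move: Zi Gi Bi; set ZI := Z ^+ i; set GI := G2 ^+ i; set BI := (a2 - 1) ^+ i.
    move=> Zi Gi Bi.
    field; rewrite ?Z0 ?G0 ?Zi ?Gi ?Bi ?b1n0 ?b2n0 //.
  apply: (subM hOs); first by apply/ext; apply: (subM hAs) => //; exact: (subn hAs).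
  apply: (subM hOs) => //; apply: (subM hOs); last exact: (subX hOs).
  by apply: (subM hOs) => //; exact: (subX hOs).
have eq : u1 = d0%:A + \sum_(i < j) (d i)%:A * u2 ^+ i.+1.
  have ea2 : a2 = (z / g2)%:A * u2 + 1.
    rewrite /u2 -!in_algE; field; rewrite ?fmorph_eq0 ?z0 ?g2n0 //.
  rewrite {1}/u1 ha1 ea2 exprD1n big_ord_recl /= expr0.
  set T := (z / g2)%:A * u2.
  have hsum : \sum_(i < j) (d i)%:A * u2 ^+ i.+1 =
      (g1 * c / z)%:A * \sum_(i < j) T ^+ bump 0 i *+ 'C(j, bump 0 i).
    rewrite mulr_sumr; apply: eq_bigr => i _.
    rewrite /bump add1n /d /T -mulr_natr -!in_algE.
    rewrite ?(rmorphM, fmorphV, rmorphXn, rmorph_nat) ?exprS ?exprMn ?rmorphXn ?exprVn.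
    set Z := GRing.in_alg L z. set G2 := GRing.in_alg L g2.
    have Z0 : Z != 0 by rewrite fmorph_eq0.
    have G0 : G2 != 0 by rewrite fmorph_eq0.
    have Gi : G2 ^+ i != 0 by rewrite expf_neq0.
    have Zi : Z ^+ i != 0 by rewrite expf_neq0.
    move: Gi Zi; set ZI := Z ^+ i; set GI := G2 ^+ i; set UI := u2 ^+ i => Gi Zi.
    field; rewrite ?Z0 ?G0 ?Gi ?Zi //.
  rewrite hsum /d0 bin0; set SS := \sum_(i < j) _.
  rewrite -!in_algE; field; rewrite ?fmorph_eq0 //.
suff h : adjoin_ring A u2 u1.
  by case: hx => Q hQ ->; apply: (adjpoly hAs).
rewrite eq; apply: (adjD hAs); first exact: (adjC hAs).
apply: (adjsum hAs) => i _; apply: (adjM hAs); first exact: (adjC hAs).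
by apply: (adjX hAs); apply: (adjb hAs).
Qed.
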